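(* Let $\mathcal{P} \subseteq \mathcal{X}$ be a finite point set, let $k \ge 1$ be an integer, let $r \in [0, k-1]$ be an integer and let $\eta \ge 1$. If $\mathrm{OPT}_{k-r}(\mathcal{P}) \le \eta \cdot \mathrm{OPT}_k(\mathcal{P})$, then $\mathrm{OPT}_k(\mathcal{P}) \le 4 \cdot \mathrm{OPT}_{k + \lfloor r/(12\eta) \rfloor}(\mathcal{P})$.
   Context: $(\mathcal{X}, d)$ is a metric space (the ground set) and $\mathcal{P} \subseteq \mathcal{X}$ is finite. For a set $\mathcal{U} \subseteq \mathcal{X}$, $\mathrm{cost}(\mathcal{U},\mathcal{P}) = \sum_{p \in \mathcal{P}} \min_{q \in \mathcal{U}} d(p,q)$. For an integer $t \ge 1$, $\mathrm{OPT}_t(\mathcal{P}) = \min_{\mathcal{U} \subseteq \mathcal{X},\, |\mathcal{U}| \le t} \mathrm{cost}(\mathcal{U},\mathcal{P})$ (the optimal ''improper'' $t$-median cost, where centers may be any points of $\mathcal{X}$, not necessarily of $\mathcal{P}$). *)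

(* Defs.v *)
From mathcomp Require Import all_boot all_order all_algebra.
From mathcomp Require Import all_classical all_reals.
Set Implicit Arguments. Unset Strict Implicit. Unset Printing Implicit Defensive.
Import Order.TTheory GRing.Theory Num.Theory.
Local Open Scope ring_scope.
Local Open Scope classical_set_scope.

Definition is_metric (R : realType) (X : Type) (d : X -> X -> R) : Prop :=
  [/\ (forall x y, 0 <= d x y),
      (forall x y, d x y = 0 <-> x = y),
      (forall x y, d x y = d y x) &
      (forall x y z, d x z <= d x y + d y z)].

Definition dist_to (R : realType) (X : Type) (d : X -> X -> R)
    (U : seq X) (p : X) : R :=
  match U with
  | [::] => 0
  | q0 :: _ => \big[Order.min/d p q0]_(q <- U) d p q
  end.

Definition cost (R : realType) (X : Type) (d : X -> X -> R)
    (U P : seq X) : R :=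
  \sum_(p <- P) dist_to d U p.

Definition OPT (R : realType) (X : Type) (d : X -> X -> R)
    (t : nat) (P : seq X) : R :=
  inf [set c | exists U : seq X, [/\ (0 < size U)%N, (size U <= t)%N & c = cost d U P]].

(* Main.v *)
Require Import Defs.
From mathcomp Require Import all_boot all_order all_algebra.
From mathcomp Require Import all_classical all_reals.
From mathcomp Require Import ring lra zify.
Import Order.TTheory GRing.Theory Num.Theory.
Set Implicit Arguments. Unset Strict Implicit.
Local Open Scope ring_scope.



Lemma bigmin_le (R : realType) (I : eqType) (F : I -> R) (x0 : R) (U : seq I) q :
  q \in U -> \big[Order.min/x0]_(i <- U) F i <= F q.
Proof.
elim: U => [//|u U IH]; rewrite in_cons big_cons ge_min => /orP[/eqP->|/IH->];
  by rewrite ?lexx ?orbT.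
Qed.

Lemma bigmin_mem (R : realType) (I : eqType) (F : I -> R) (x0 : R) (U : seq I) :
  \big[Order.min/x0]_(i <- U) F i \in x0 :: map F U.
Proof.
elim: U => [|u U IH]; first by rewrite big_nil mem_head.
rewrite big_cons /Order.min; case: ifP => _; first by rewrite /= !in_cons eqxx orbT.
move: IH; rewrite /= !in_cons => /orP[->//|H]; by rewrite H !orbT.
Qed.

Lemma dist_le (R : realType) (X : eqType) (d : X -> X -> R) U p q :
  q \in U -> dist_to d U p <= d p q.
Proof.
case: U => [//|u U] qU; rewrite /dist_to; exact: bigmin_le.
Qed.

Lemma dist_mem (R : realType) (X : eqType) (d : X -> X -> R) U p :
  U != [::] -> dist_to d U p \in map (d p) U.
Proof.
case: U => [//|u U] _; rewrite /dist_to.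
have := bigmin_mem (d p) (d p u) (u :: U).
by rewrite in_cons => /orP[/eqP->|//]; rewrite mem_head.
Qed.

Definition nearest (R : realType) (X : eqType) (d : X -> X -> R) U p :=
  nth p U (index (dist_to d U p) (map (d p) U)).

Lemma nearestP (R : realType) (X : eqType) (d : X -> X -> R) U p :
  U != [::] -> nearest d U p \in U /\ d p (nearest d U p) = dist_to d U p.
Proof.
move=> Un; have H := @dist_mem R X d U p Un.
have Hi : (index (dist_to d U p) (map (d p) U) < size U)%N.
  by rewrite -(size_map (d p)) index_mem.
split; first exact: mem_nth.
by rewrite /nearest -(nth_map p (d p p)) // nth_index.
Qed.

Lemma dist_ge0 (R : realType) (X : eqType) (d : X -> X -> R) U p :
  (forall x y, 0 <= d x y) -> 0 <= dist_to d U p.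
Proof.
move=> d0; case: U => [//|u U]; have := @dist_mem R X d (u::U) p isT.
by move=> /mapP[q _ ->].
Qed.

Lemma dist_sub (R : realType) (X : eqType) (d : X -> X -> R) U V p :
  V != [::] -> {subset V <= U} -> dist_to d U p <= dist_to d V p.
Proof.
move=> Vn sub; have [qV <-] := @nearestP R X d V p Vn; apply: dist_le; exact: sub.
Qed.

Lemma dist_tri (R : realType) (X : eqType) (d : X -> X -> R) U p q :
  is_metric d -> U != [::] -> dist_to d U p <= d p q + dist_to d U q.
Proof.
move=> [d0 _ _ tri] Un; have [uU <-] := @nearestP R X d U q Un.
apply: le_trans (tri _ q _); exact: dist_le.
Qed.



Lemma sum_const_seq (R : realType) (I : Type) (r : seq I) (c : R) :
  \sum_(i <- r) c = (size r)%:R * c.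
Proof.
elim: r => [|x r IH]; first by rewrite big_nil mul0r.
by rewrite big_cons IH /= -add1n natrD mulrDl mul1r.
Qed.

Lemma step (R : realType) (X : eqType) (d : X -> X -> R) (P S T : seq X) :
  is_metric d -> uniq S -> T != [::] -> (size T < size S)%N ->
  exists S', [/\ uniq S', S' != [::], (size S' < size S)%N &
   cost d S' P <= cost d S P + 2 * (cost d S P + cost d T P) / (size S - size T)%:R].
Proof.
move=> met uS Tn ltTS; have [d0 d0iff dsym tri] := met.
have Sn : S != [::] by case: (S) ltTS.
pose δ := fun s => dist_to d T s.
pose t := fun s => nearest d T s.
pose a := fun p => nearest d S p.
pose w := fun p => dist_to d S p + dist_to d T p.
pose W := fun s => \sum_(p <- P | a p == s) w p.
pose nl := fun s => has (fun s' => (s' != s) && (t s' == t s) && (δ s' <= δ s)) S.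
pose NL := [seq s <- S | nl s].
pose L := [seq s <- S | ~~ nl s].
have sizeL : (size L <= size T)%N.
  rewrite -(size_map t); apply: uniq_leq_size.
  - rewrite map_inj_in_uniq ?filter_uniq //.
    move=> x y; rewrite !mem_filter => /andP[nx xS] /andP[ny yS] txy.
    apply/eqP/negPn/negP => nxy.
    move/hasPn: nx => /(_ y yS); rewrite eq_sym nxy txy eqxx /= -ltNge => h1.
    move/hasPn: ny => /(_ x xS); rewrite nxy txy eqxx /= -ltNge => h2.
    by move: (lt_trans h1 h2); rewrite ltxx.
  - move=> _ /mapP[s _ ->]; exact: (@nearestP R X d T s Tn).1.
have sizeNL : (size S - size T <= size NL)%N.
  have := count_predC nl S; rewrite -!size_filter -/NL -/L; lia.
pose N := size NL.
have Npos : (0 < N)%N by rewrite /N; lia.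
have w0 : forall p, 0 <= w p by move=> p; rewrite addr_ge0 // dist_ge0.
have W0 : forall s, 0 <= W s by move=> s; rewrite sumr_ge0.
have sumW : \sum_(s <- S) W s = cost d S P + cost d T P.
  rewrite /W; under eq_bigr => s _ do rewrite big_mkcond.
  rewrite exchange_big /= /cost -big_split /=; apply: eq_bigr => p _.
  have [apS _] := @nearestP R X d S p Sn.
  rewrite -big_mkcond (big_rem _ apS) eqxx /= big1_seq ?addr0 //.
  move=> s /andP[/eqP aps]; rewrite mem_rem_uniq // inE => /andP[ns _].
  by rewrite -aps eqxx in ns.
have sumNL : \sum_(s <- NL) W s <= cost d S P + cost d T P.
  rewrite -sumW /NL big_filter big_mkcond /=; apply: ler_sum => s _.
  by case: ifP => // _; exact: W0.
have [s sNL Ws] : exists2 s, s \in NL & N%:R * W s <= \sum_(s <- NL) W s.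
  suff: has (fun s => N%:R * W s <= \sum_(s <- NL) W s) NL by case/hasP => x; exists x.
  apply/negPn/negP => /hasPn H.
  have : \sum_(s <- NL | s \in NL) (\sum_(s0 <- NL) W s0) < \sum_(s <- NL | s \in NL) (N%:R * W s).
    apply: ltr_sum.
      apply/hasP; move: Npos; rewrite /N; case E: NL => [//|x r] _.
      by exists x; rewrite mem_head.
    by move=> i iN; have := H i iN; rewrite -ltNge.
  rewrite -big_seq -[X in _ < X]big_seq.
  by rewrite sum_const_seq -mulr_sumr ltxx.
move: sNL; rewrite mem_filter => /andP[/hasP[s' s'S /andP[/andP[ns' ts']] ds'] sS].
exists ([seq x <- S | x != s]); split.
- exact: filter_uniq.
- apply/eqP => E; have : s' \in [seq x <- S | x != s] by rewrite mem_filter /= ns'.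
  by rewrite E.
- rewrite size_filter.
  have : (0 < count (pred1 s) S)%N by rewrite -has_count has_pred1.
  have -> : count (fun x => x != s) S = count (predC (pred1 s)) S by apply: eq_count.
  have := count_predC (pred1 s) S; lia.
have S'n : [seq x <- S | x != s] != [::].
  apply/eqP => E; have : s' \in [seq x <- S | x != s] by rewrite mem_filter /= ns'.
  by rewrite E.
have Hp : forall p, dist_to d ([seq x <- S | x != s]) p <=
    dist_to d S p + (if a p == s then 2 * w p else 0).
  move=> p; have [apS apd] := @nearestP R X d S p Sn.
  case: ifP => [/eqP aps|apns].
  - have s'S' : s' \in [seq x <- S | x != s] by rewrite mem_filter /= ns'.
    apply: le_trans (dist_le d p s'S') _.
    have [tsT tsd] := @nearestP R X d T s Tn.
    have [ts'T ts'd] := @nearestP R X d T s' Tn.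
    have h1 := tri p s s'.
    have h2 := tri s (t s) s'.
    have h3 : d (t s) s' = δ s' by rewrite dsym -(eqP ts') /t ts'd.
    have h4 : d s (t s) = δ s by rewrite /t tsd.
    have h5 := @dist_tri R X d T s p met Tn.
    have h6 : d p s = dist_to d S p by rewrite -aps apd.
    rewrite dsym h6 in h5.
    move: ds'; rewrite /w /δ in h3 h4 h5 *; rewrite -h6; lra.
  - have s'S' : a p \in [seq x <- S | x != s] by rewrite mem_filter /= apns.
    by rewrite addr0 -apd; apply: dist_le.
apply: le_trans (ler_sum _ (fun p _ => Hp p)) _.
rewrite big_split /= -/(cost d S P) lerD2l.
have -> : \sum_(i <- P) (if a i == s then 2 * w i else 0) = 2 * W s.
  by rewrite /W mulr_sumr [RHS]big_mkcond.
rewrite -mulrA ler_wpM2l // ler_pdivlMr ?ltr0n ?subn_gt0 //.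
have hM : (size S - size T)%:R <= N%:R :> R by rewrite ler_nat.
apply: le_trans (ler_wpM2l (W0 s) hM) _.
by rewrite mulrC; apply: le_trans Ws sumNL.
Qed.



Lemma cost_ge0 (R : realType) (X : eqType) (d : X -> X -> R) U P :
  is_metric d -> 0 <= cost d U P.
Proof. by case=> d0 _ _ _; apply: sumr_ge0 => p _; apply: dist_ge0. Qed.

Lemma iter_centers (R : realType) (X : eqType) (d : X -> X -> R) (P T : seq X) (k r : nat) :
  is_metric d -> T != [::] -> (size T + r <= k)%N -> (0 < r)%N ->
  forall j S, uniq S -> S != [::] -> (size S <= k + j)%N ->
  exists S', [/\ S' != [::], (size S' <= k)%N &
    cost d S' P + cost d T P <= (1 + 2 / r%:R) ^+ j * (cost d S P + cost d T P)].
Proof.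
move=> met Tn hk r0; set x := 2 / r%:R.
have x0 : 0 <= x by rewrite /x divr_ge0 ?ler0n.
elim=> [|j IH] S uS Sn hS.
  by exists S; split => //; [rewrite addn0 in hS | rewrite expr0 mul1r].
have A0 : 0 <= cost d S P + cost d T P by rewrite addr_ge0 ?cost_ge0.
have q0 : 0 <= (1 + x) ^+ j by rewrite exprn_ge0 // addr_ge0.
case: (leqP (size S) (k + j)) => h.
  have [S' [S'n S'k HS']] := IH S uS Sn h.
  exists S'; split => //; apply: le_trans HS' _.
  rewrite exprS mulrDl mul1r mulrDl lerDl.
  by rewrite mulr_ge0 // mulr_ge0.
have hTS : (size T < size S)%N by lia.
have [S1 [uS1 S1n S1s HS1]] := step P met uS Tn hTS.
have [S' [S'n S'k HS']] := IH S1 uS1 S1n (ltac:(lia)).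
exists S'; split => //; apply: le_trans HS' _.
rewrite exprS [(1 + x) * _]mulrC -mulrA; apply: ler_wpM2l => //.
have hinv : ((size S - size T)%:R)^-1 <= (r%:R)^-1 :> R.
  by rewrite lef_pV2 ?posrE ?ltr0n ?ler_nat //; lia.
have := ler_wpM2l (_ : 0 <= 2 * (cost d S P + cost d T P)) hinv.
move=> /(_ ltac:(by rewrite mulr_ge0)) H.
rewrite /x; move: HS1 H; lra.
Qed.



Lemma pow_bound (R : realType) (x : R) (m : nat) :
  0 <= x -> (1 + x) ^+ m * (1 - m%:R * x) <= 1.
Proof.
move=> x0; elim: m => [|m IH]; first by rewrite expr0 mul0r subr0 mul1r.
have q0 : 0 <= (1 + x) ^+ m by rewrite exprn_ge0 // addr_ge0.
rewrite exprS [(1 + x) * _]mulrC -mulrA.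
have -> : (1 + x) * (1 - m.+1%:R * x) = (1 - m%:R * x) - m.+1%:R * (x * x).
  by rewrite -addn1 natrD; ring.
have c0 : 0 <= m.+1%:R * (x * x) by rewrite mulr_ge0 ?mulr_ge0.
have := ler_wpM2l q0 (_ : (1 - m%:R * x) - m.+1%:R * (x * x) <= 1 - m%:R * x).
move=> /(_ ltac:(lra)); lra.
Qed.

Lemma OPT_ge0 (R : realType) (X : eqType) (d : X -> X -> R) t P :
  is_metric d -> 0 <= OPT d t P.
Proof.
move=> met; rewrite /OPT.
set E := (X in inf X).
case: (pselect (exists y, E y)) => [ne|ne].
  apply: lb_le_inf => // y [U [_ _ ->]]; exact: cost_ge0.
rewrite (_ : E = set0) ?inf0 //; apply/seteqP; split => y Ey //.
by exfalso; apply: ne; exists y.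
Qed.

Lemma OPT_le (R : realType) (X : eqType) (d : X -> X -> R) t P U :
  is_metric d -> (0 < size U)%N -> (size U <= t)%N -> OPT d t P <= cost d U P.
Proof.
move=> met h1 h2; rewrite /OPT; apply: ge_inf; last by exists U.
exists 0 => y [V [_ _ ->]]; exact: cost_ge0.
Qed.



Lemma ar_key (R : realFieldType) (O cS cT cS' q y : R) : 0 <= y -> y <= 1/6 -> O <= cS' ->
  cS' + cT <= q * (cS + cT) -> q * (1 - y) <= 1 -> 0 <= cS + cT -> 0 <= cT ->
  (1 - y) * O - cS <= cT * y.
Proof.
move=> y0 y6 h1 h2 hp A0 cT0.
have y1 : 0 <= 1 - y by lra.
have f1 := ler_wpM2l y1 (_ : O + cT <= q * (cS + cT)).
have := f1 ltac:(lra) => {}f1.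
have f2 := ler_wpM2r A0 hp.
lra.
Qed.

Lemma ar_final (R : realFieldType) (O cS e y : R) : 0 <= O -> y * e <= 1/6 -> y <= 1/6 ->
  (1 - y) * O - cS <= e * O * y -> 2/3 * O <= cS.
Proof.
move=> O0 ye y6 h.
have f1 := ler_wpM2r O0 ye.
have f2 := ler_wpM2r O0 y6.
lra.
Qed.

Lemma ar_yeta (R : realFieldType) (m r e ri : R) : m * (12 * e) <= r -> r * ri = 1 -> 0 <= ri ->
  m * (2 * ri) * e <= 1/6.
Proof.
move=> h hr ri0; have := ler_wpM2r ri0 h; rewrite hr => H; lra.
Qed.



Lemma cost_undup (R : realType) (X : eqType) (d : X -> X -> R) U P :
  U != [::] -> cost d (undup U) P = cost d U P.
Proof.
case: U => [//|u U] _.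
have Un' : undup (u :: U) != [::].
  apply/eqP => E; have : u \in undup (u :: U) by rewrite mem_undup mem_head.
  by rewrite E.
apply: eq_bigr => p _; apply/le_anti; rewrite !dist_sub // => q; by rewrite mem_undup.
Qed.

Theorem lemma4p1 (R : realType) (X : eqType) (d : X -> X -> R)
    (P : seq X) (k r : nat) (eta : R) :
  is_metric d -> uniq P ->
  (1 <= k)%N -> (r <= k - 1)%N -> 1 <= eta ->
  OPT d (k - r) P <= eta * OPT d k P ->
  OPT d k P <= 4 * OPT d (k + Num.truncn (r%:R / (12 * eta))) P.
Proof.
move=> met uP k1 rk eta1 hyp.
set m := Num.truncn _.
have O0 := fun t => @OPT_ge0 R X d t P met.
have eta0 : 0 < eta by lra.
have z0 : 0 <= r%:R / (12 * eta) by rewrite divr_ge0 ?mulr_ge0 //; lra.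
case: (posnP m) => [m0|mpos].
  rewrite m0 addn0; have := O0 k; lra.
have r12 : 1 <= r%:R / (12 * eta).
  have h := @truncn_ge_nat R (r%:R / (12 * eta)) 1 z0.
  rewrite -/m mpos in h; exact: (esym h).
have mle : m%:R <= r%:R / (12 * eta) by rewrite truncn_le.
have r0 : (0 < r)%N.
  rewrite lt0n; apply/negP => /eqP r0; move: r12; rewrite r0 mul0r; lra.
case: (pselect (exists x : X, True)) => [[x0 _]|noX].
  pose x : R := 2 / r%:R.
  pose y : R := m%:R * x.
  have x0' : 0 <= x by rewrite /x divr_ge0 ?ler0n.
  have ri : r%:R * (r%:R)^-1 = 1 :> R by rewrite mulfV // pnatr_eq0 -lt0n.
  have h12 : m%:R * (12 * eta) <= r%:R by rewrite -ler_pdivlMr // mulr_gt0 //; lra.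
  have yeta : y * eta <= 1/6.
    by apply: ar_yeta h12 ri _; rewrite invr_ge0 ler0n.
  have y0 : 0 < y by rewrite /y /x mulr_gt0 ?ltr0n ?divr_gt0 ?ltr0n.
  have y6 : y <= 1/6.
    have := ler_wpM2l (ltW y0) eta1; rewrite mulr1 => H; exact: le_trans H yeta.
  have main : forall U, (0 < size U)%N -> (size U <= k + m)%N ->
      2/3 * OPT d k P <= cost d U P.
    move=> U h1 h2.
    have Un : U != [::] by rewrite -size_eq0 -lt0n.
    set S := undup U.
    have uS : uniq S := undup_uniq U.
    have [u uU] : exists u, u \in U by case: (U) Un => [//|u V _]; exists u; rewrite mem_head.
    have Sn : S != [::].
      apply/eqP => E; have : u \in S by rewrite mem_undup.
      by rewrite E.
    have hS : (size S <= k + m)%N by rewrite (leq_trans (size_undup U)).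
    have cSU : cost d S P = cost d U P := @cost_undup R X d U P Un.
    rewrite -cSU.
    have key : ((1 - y) * OPT d k P - cost d S P) / y <= OPT d (k - r) P.
      apply: lb_le_inf.
        exists (cost d [:: x0] P); exists [:: x0]; split => //=; clear - rk k1; lia.
      move=> c [T [hT1 hT2 ->]].
      have Tn : T != [::] by rewrite -size_eq0 -lt0n.
      have hTk : (size T + r <= k)%N by clear - hT2 rk k1; lia.
      have [S' [S'n S'k HS']] := @iter_centers R X d P T k r met Tn hTk r0 m S uS Sn hS.
      have hO := @OPT_le R X d k P S' met (ltac:(by rewrite lt0n size_eq0)) S'k.
      have hp := pow_bound m x0'.
      rewrite ler_pdivrMr //.
      apply: (ar_key (ltW y0) y6 hO HS' hp); first by rewrite addr_ge0 ?cost_ge0.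
      exact: cost_ge0.
    have := le_trans key hyp; rewrite ler_pdivrMr // => h.
    exact: ar_final (O0 k) yeta y6 h.
  have : 2/3 * OPT d k P <= OPT d (k + m) P.
    apply: lb_le_inf.
      exists (cost d [:: x0] P); exists [:: x0]; split => //=; clear - rk k1; lia.
    by move=> c [U [h1 h2 ->]]; exact: main.
  have := O0 (k + m); move=> H1 H2; apply: (le_trans (_ : _ <= 3/2 * OPT d (k + m) P)).
    by clear - H2; lra.
  by clear - H1; lra.
have E0 : forall t, OPT d t P = 0.
  move=> t; rewrite /OPT; set E := (X in inf X).
  rewrite (_ : E = set0) ?inf0 //.
  apply/seteqP; split => y // [[|u U] [h1 _ _]] //.
  by exfalso; apply: noX; exists u.
by rewrite !E0 mulr0.
Qed.
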